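(* Let $(\mathbf{i},\kappa)$ be an idempotent datum as in the context. Then $(\mathbf{i},\kappa)$ admits a compatible metric longitude if and only if it is a parity idempotent datum.
   Context: $I$ is the vertex set of a finite simple bipartite graph, $I=I_{\bar0}\sqcup I_{\bar1}$; an integer $k$ has the parity of $i$ if $k\bmod2$ equals the parity of $i$. Fix a total order $v_1<\dots<v_r$ on $I$ with all even vertices first. Let $\mathbf{R}=(R_i)_{i\in I}$ where $R_i$ is a finite multiset of integers of the parity of $i$ ($\lambda_i=|R_i|$, $\ell=\sum_i\lambda_i$). With $\rho_i(q)$ the multiplicity of $2q$ (i even) or $2q+1$ (i odd) in $R_i$, form the sequence of labels $(j_1,\dots,j_\ell)$ as the concatenation over increasing $q\in\mathbb{Z}$ of blocks ($v_1$ repeated $\rho_{v_1}(q)$ times, …, $v_r$ repeated $\rho_{v_r}(q)$ times); the $p$-th red strand has label $j_p$ and longitude $r_p$, the corresponding element of $R_{j_p}$ (so $r_1\le\dots\le r_\ell$). An idempotent datum is $(\mathbf{i},\kappa)$ with $\mathbf{i}=(i_1,\dots,i_n)\in I^n$ (labels of black strands) and $\kappa:\{1,\dots,\ell\}\to\{0,\dots,n\}$ weakly increasing; it describes a left-to-right sequence of strands in which red strand $p$ lies between the $\kappa(p)$-th and $(\kappa(p)+1)$-st black strands. Each strand has the parity of its label. Parity distance: for consecutive strands $s$ left of $s'$, $\delta(s,s')=2$ if $s$ is black, $s'$ is red and they have the same parity; $1$ if they have different parities; $0$ otherwise; for $s$ left of $s'$ non-consecutive, $\delta(s,s')$ is the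 sum over consecutive pairs between them. $(\mathbf{i},\kappa)$ is parity if $\delta(p,p')\le|r_p-r_{p'}|$ for every pair of red strands $p$ left of $p'$. A compatible metric longitude is $\mathbf{a}=(a_1,\dots,a_n)\in\mathbb{Z}^n$ with (1) $a_k$ of the parity of $i_k$, (2) $a_k\le a_{k+1}$, (3) for all $k,p$: $a_k\ge r_p$ if and only if $k>\kappa(p)$. *)

(* Defs.v *)
From mathcomp Require Import all_boot all_order all_algebra.
Set Implicit Arguments. Unset Strict Implicit. Unset Printing Implicit Defensive.
Import Order.TTheory GRing.Theory Num.Theory.

(* Conventions:
   - The vertex set I with its fixed total order v_1 < ... < v_r is 'I_r
     (with the natural order of ordinals); [par v] is true iff v is odd.
   - Integers have parity [odd `|z|].
   - Strands, red strands and black strands are 0-indexed. *)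

Definition zpar (z : int) : bool := odd `|z|%N.

Definition rho (r : nat) (par : 'I_r -> bool) (R : 'I_r -> seq int)
  (v : 'I_r) (q : int) : nat :=
  count_mem (2 * q + (par v)%:R)%R (R v).

(* a finite window of q's that contains every q with some rho_v(q) > 0 *)
Definition qbound (r : nat) (R : 'I_r -> seq int) : nat :=
  \sum_(v : 'I_r) \sum_(z <- R v) `|z|%N.

Definition qrange (r : nat) (R : 'I_r -> seq int) : seq int :=
  [seq (k%:Z - (qbound R)%:Z)%R | k <- iota 0 (qbound R).*2.+1].

(* The red strands, left to right: (label j_p, longitude r_p), obtained by
   concatenating over increasing q the blocks
   (v_1 repeated rho_{v_1}(q) times, ..., v_r repeated rho_{v_r}(q) times). *)
Definition reds (r : nat) (par : 'I_r -> bool) (R : 'I_r -> seq int)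
  : seq ('I_r * int) :=
  flatten [seq flatten [seq nseq (rho par R v q) (v, (2 * q + (par v)%:R)%R)
                       | v <- enum 'I_r]
          | q <- qrange R].

(* strands: inl k = k-th black strand, inr p = p-th red strand *)
Definition strand := (nat + nat)%type.

(* left-to-right sequence of strands: red strand p lies between the
   kappa(p)-th and (kappa(p)+1)-st black strands (1-indexed as in the paper) *)
Definition strands (n : nat) (kappa : seq nat) : seq strand :=
  flatten [seq [seq (inr p : strand) | p <- iota 0 (size kappa)
                                     & nth 0 kappa p == k]
               ++ (if k < n then [:: (inl k : strand)] else [::])
          | k <- iota 0 n.+1].

Definition is_black (s : strand) : bool := if s is inl _ then true else false.
Definition is_red (s : strand) : bool := ~~ is_black s.

Definition spar (r : nat) (par : 'I_r -> bool) (R : 'I_r -> seq int)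
  (ii : seq 'I_r) (s : strand) : bool :=
  match s with
  | inl k => nth false (map par ii) k
  | inr p => nth false (map (fun x => par x.1) (reds par R)) p
  end.

Definition delta1 (r : nat) (par : 'I_r -> bool) (R : 'I_r -> seq int)
  (ii : seq 'I_r) (s s' : strand) : nat :=
  if is_black s && is_red s' && (spar par R ii s == spar par R ii s') then 2
  else if spar par R ii s != spar par R ii s' then 1 else 0.

Definition pdist (r : nat) (par : 'I_r -> bool) (R : 'I_r -> seq int)
  (ii : seq 'I_r) (S : seq strand) (a b : nat) : nat :=
  \sum_(a <= t < b) delta1 par R ii (nth (inl 0) S t) (nth (inl 0) S t.+1).

Definition longitude (r : nat) (par : 'I_r -> bool) (R : 'I_r -> seq int)
  (p : nat) : int := nth 0%R (map snd (reds par R)) p.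

Definition idem_datum (r : nat) (par : 'I_r -> bool) (R : 'I_r -> seq int)
  (ii : seq 'I_r) (kappa : seq nat) : Prop :=
  [/\ size kappa = size (reds par R),
      all (fun k => k <= size ii) kappa & sorted leq kappa].

Definition parity_datum (r : nat) (par : 'I_r -> bool) (R : 'I_r -> seq int)
  (ii : seq 'I_r) (kappa : seq nat) : Prop :=
  let S := strands (size ii) kappa in
  forall p p', p < p' -> p' < size (reds par R) ->
    (pdist par R ii S (index (inr p : strand) S) (index (inr p' : strand) S)
       <= `|longitude par R p - longitude par R p'|)%N.

Definition compatible_metric_longitude (r : nat) (par : 'I_r -> bool)
  (R : 'I_r -> seq int) (ii : seq 'I_r) (kappa : seq nat) (a : seq int) : Prop :=
  [/\ size a = size ii,
      (forall k, k < size a -> zpar (nth 0%R a k) = nth false (map par ii) k),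
      (forall k, k.+1 < size a -> (nth 0%R a k <= nth 0%R a k.+1)%R) &
      (* 0-indexed black k is the paper's (k+1)-st: a_{k+1} >= r_p iff k+1 > kappa(p) *)
      (forall k p, k < size a -> p < size (reds par R) ->
         (longitude par R p <= nth 0%R a k)%R = (nth 0 kappa p <= k))].

(* Main.v *)
From mathcomp Require Import zify.
Require Import Defs.
From mathcomp Require Import all_boot all_order all_algebra.
Import Order.TTheory GRing.Theory Num.Theory.
Set Implicit Arguments. Unset Strict Implicit. Unset Printing Implicit Defensive.

Lemma pairwise_flatten (T : Type) (r : rel T) (ss : seq (seq T)) :
  pairwise (allrel r) ss -> all (pairwise r) ss -> pairwise r (flatten ss).
Proof.
elim: ss => //= s ss IH /andP[Hs Hss] /andP[Ps Pss].
rewrite pairwise_cat Ps (IH Hss Pss) !andbT.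
elim: ss Hs {IH Hss Pss} => [|s' ss IH'] /=; first by rewrite allrel0r.
move=> /andP[H1 H2].
by rewrite allrel_catr H1 IH'.
Qed.

Lemma pairwise_iota (r : rel nat) m k :
  (forall i j, m <= i -> i < j -> j < m + k -> r i j) -> pairwise r (iota m k).
Proof.
elim: k m => //= k IH m H; apply/andP; split.
  apply/allP => j; rewrite mem_iota => /andP[H1 H2]; apply: H => //; lia.
apply: IH => i j H1 H2 H3; apply: H => //; lia.
Qed.

Lemma pairwise_nseq (T : Type) (r : rel T) n x : r x x -> pairwise r (nseq n x).
Proof.
move=> rxx; elim: n => //= n ->; rewrite andbT.
by elim: n => //= n ->; rewrite rxx.
Qed.

Lemma index_lt_key (T : eqType) (f : T -> nat) (S : seq T) x y :
  pairwise (fun x y => f x < f y) S -> x \in S -> y \in S ->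
  (index x S < index y S) = (f x < f y).
Proof.
move=> HS Hx Hy.
have HP := pairwiseP x HS.
have Ix : index x S < size S by rewrite index_mem.
have Iy : index y S < size S by rewrite index_mem.
case: (ltngtP (index x S) (index y S)) => H.
- by have := HP _ _ Ix Iy H; rewrite !nth_index.
- by have := HP _ _ Iy Ix H; rewrite !nth_index // => /ltnW; rewrite leqNgt => /negbTE.
- have : nth x S (index x S) = nth x S (index y S) by rewrite H.
  by rewrite !nth_index // => ->; rewrite ltnn.
Qed.

Lemma pairwise_key_uniq (T : eqType) (f : T -> nat) (S : seq T) :
  pairwise (fun x y => f x < f y) S -> uniq S.
Proof.
elim: S => //= x S IH /andP[Ha Hp]; rewrite IH // andbT.
apply/negP => xS; have := allP Ha _ xS; by rewrite ltnn.
Qed.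

Definition skey (l : nat) (kappa : seq nat) (s : strand) : nat :=
  match s with inl k => k * l.+1 + l | inr p => nth 0 kappa p * l.+1 + p end.

Lemma key_ll l kappa k k' :
  (skey l kappa (inl k) < skey l kappa (inl k')) = (k < k').
Proof. rewrite /= ltn_add2r ltn_pmul2r //. Qed.

Lemma key_lr l kappa k p : p < l ->
  (skey l kappa (inl k) < skey l kappa (inr p)) = (k < nth 0 kappa p).
Proof. rewrite /=; move=> Hp; apply/idP/idP => H; nia. Qed.

Lemma key_rl l kappa k p : p < l ->
  (skey l kappa (inr p) < skey l kappa (inl k)) = (nth 0 kappa p <= k).
Proof. rewrite /=; move=> Hp; apply/idP/idP => H; nia. Qed.

Lemma sorted_nth_mono (kappa : seq nat) p p' : sorted leq kappa ->
  p <= p' -> p' < size kappa -> nth 0 kappa p <= nth 0 kappa p'.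
Proof.
move=> Hs H1 H2; apply: (sorted_leq_nth leq_trans leqnn) => //; rewrite inE; lia.
Qed.

Lemma key_rr kappa p p' : sorted leq kappa -> p < size kappa -> p' < size kappa ->
  (skey (size kappa) kappa (inr p) < skey (size kappa) kappa (inr p')) = (p < p').
Proof.
move=> Hs Hp Hp' /=.
case: (ltnP p p') => H.
  have := sorted_nth_mono Hs (ltnW H) Hp'; nia.
have := sorted_nth_mono Hs H Hp; nia.
Qed.

Lemma strands_pairwise n kappa : sorted leq kappa ->
  pairwise (fun x y => skey (size kappa) kappa x < skey (size kappa) kappa y)
    (strands n kappa).
Proof.
move=> Hs; rewrite /strands.
have Hb : forall k s, s \in [seq (inr p : strand) | p <- iota 0 (size kappa) & nth 0 kappa p == k]
              ++ (if k < n then [:: (inl k : strand)] else [::]) ->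
          k * (size kappa).+1 <= skey (size kappa) kappa s <= k * (size kappa).+1 + size kappa.
  move=> k s; rewrite mem_cat => /orP[/mapP[p]|].
    rewrite mem_filter mem_iota => /andP[/eqP <- Hp] -> /=; lia.
  by case: ifP => // _; rewrite inE => /eqP -> /=; lia.
apply: pairwise_flatten.
  rewrite pairwise_map; apply: pairwise_iota => i j _ Hij _.
  apply/allrelP => x y Hx Hy.
  have := Hb _ _ Hx; have := Hb _ _ Hy; nia.
apply/allP => G /mapP[k _ ->]; rewrite pairwise_cat; apply/and3P; split.
- apply/allrelP => x y /mapP[p]; rewrite mem_filter mem_iota => /andP[/eqP Hk Hp] ->.
  by case: ifP => // _; rewrite inE => /eqP -> /=; rewrite Hk; lia.
- rewrite pairwise_map; apply: pairwise_filter; apply: pairwise_iota => i j _ Hij Hj.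
  by rewrite /relpre /= -/(skey (size kappa) kappa (inr i)) -/(skey (size kappa) kappa (inr j)) key_rr //; lia.
- by case: ifP.
Qed.

Lemma mem_strands n kappa s : all (fun k => k <= n) kappa ->
  (s \in strands n kappa) = (match s with inl k => k < n | inr p => p < size kappa end).
Proof.
move=> Hall; apply/flatten_mapP/idP.
  case=> k; rewrite mem_iota => /andP[_ Hk]; rewrite mem_cat => /orP[/mapP[p]|].
    by rewrite mem_filter mem_iota => /andP[_ /andP[_ Hp]] ->.
  by case: ifP => // H; rewrite inE => /eqP ->.
case: s => [k|p] H.
  exists k; first by rewrite mem_iota; lia.
  by rewrite mem_cat H inE eqxx orbT.
exists (nth 0 kappa p).
  rewrite mem_iota add0n ltnS; exact: (allP Hall _ (mem_nth 0 H)).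
rewrite mem_cat; apply/orP; left; apply/mapP; exists p => //.
by rewrite mem_filter eqxx mem_iota.
Qed.

Lemma zpar_addn (n : nat) (z : int) : zpar (n%:Z + z)%R = odd n (+) zpar z.
Proof. rewrite /zpar; lia. Qed.

Lemma zpar_subn (z : int) (n : nat) : zpar (z - n%:Z)%R = zpar z (+) odd n.
Proof. rewrite /zpar; lia. Qed.

Lemma block_mem r (par : 'I_r -> bool) (R : 'I_r -> seq int) q x :
  x \in flatten [seq nseq (rho par R v q) (v, (2 * q + (par v)%:R)%R) | v <- enum 'I_r] ->
  x.2 = (2 * q + (par x.1)%:R)%R.
Proof. by move=> /flatten_mapP[v _]; rewrite mem_nseq => /andP[_ /eqP ->]. Qed.

Lemma reds_zpar r (par : 'I_r -> bool) R x : x \in reds par R -> zpar x.2 = par x.1.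
Proof.
rewrite /reds => /flatten_mapP[q _] /block_mem ->; rewrite /zpar; case: (par x.1); lia.
Qed.

Lemma longitude_par r (par : 'I_r -> bool) R p : p < size (reds par R) ->
  zpar (longitude par R p) = nth false (map (fun x => par x.1) (reds par R)) p.
Proof.
rewrite /longitude; case E: (reds par R) => [|x0 s] Hp; first by [].
rewrite -E in Hp *.
by rewrite (nth_map x0) // (nth_map x0) //; exact: reds_zpar (mem_nth x0 Hp).
Qed.

Lemma reds_sorted r (par : 'I_r -> bool) R
  (even_first : forall u v : 'I_r, (u < v)%N -> par u -> par v) :
  pairwise (fun x y : 'I_r * int => (x.2 <= y.2)%R) (reds par R).
Proof.
rewrite /reds; apply: pairwise_flatten.
  rewrite pairwise_map /qrange pairwise_map; apply: pairwise_iota => i j _ Hij _.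
  apply/allrelP => x y /block_mem -> /block_mem -> /=; lia.
apply/allP => B /mapP[q _ ->]; apply: pairwise_flatten.
  rewrite pairwise_map.
  have : pairwise (relpre val ltn) (enum 'I_r).
    by rewrite -pairwise_map val_enum_ord; apply: pairwise_iota.
  apply: sub_pairwise => v v' /= Hvv'.
  apply/allrelP => x y; rewrite !mem_nseq => /andP[_ /eqP ->] /andP[_ /eqP ->] /=.
  have := even_first v v' Hvv'; case: (par v); case: (par v') => /= H; [lia | by have := H isT | lia | lia].
apply/allP => s /mapP[v _ ->]; apply: pairwise_nseq; exact: lexx.
Qed.

Lemma longitude_mono r (par : 'I_r -> bool) R
  (even_first : forall u v : 'I_r, (u < v)%N -> par u -> par v) p p' :
  p <= p' -> p' < size (reds par R) -> (longitude par R p <= longitude par R p')%R.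
Proof.
move=> H1 H2; case: (ltngtP p p') => H3; last by rewrite H3.
  have : pairwise (fun a b : int => (a <= b)%R) (map snd (reds par R)).
    by rewrite pairwise_map; exact: reds_sorted.
  move/(pairwiseP 0%R) => HP; apply: HP => //; rewrite inE size_map; lia.
lia.
Qed.


Lemma pdist_split r (par : 'I_r -> bool) R ii S a b c : a <= b -> b <= c ->
  pdist par R ii S a c = pdist par R ii S a b + pdist par R ii S b c.
Proof. by move=> H1 H2; rewrite /pdist -big_cat_nat. Qed.

Lemma delta1_odd r (par : 'I_r -> bool) R ii s s' :
  odd (delta1 par R ii s s') = spar par R ii s (+) spar par R ii s'.
Proof.
rewrite /delta1; case: (is_black s); case: (is_red s');
  case: (spar par R ii s); case: (spar par R ii s') => //.
Qed.

Lemma pdist_odd r (par : 'I_r -> bool) R ii S a b : a <= b ->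
  odd (pdist par R ii S a b) =
  spar par R ii (nth (inl 0) S a) (+) spar par R ii (nth (inl 0) S b).
Proof.
elim: b => [|b IH] H.
  by move: H; rewrite leqn0 => /eqP ->; rewrite /pdist big_geq // addbb.
case: (ltngtP a b.+1) => H'; last by rewrite H' /pdist big_geq // addbb.
  rewrite /pdist big_nat_recr //= oddD -/(pdist par R ii S a b) IH; last by lia.
  rewrite delta1_odd; by case: (spar _ _ _ _); case: (spar _ _ _ _); case: (spar _ _ _ _).
lia.
Qed.

Lemma pdist_pos r (par : 'I_r -> bool) R ii S a b : a < b ->
  is_black (nth (inl 0) S a) -> is_red (nth (inl 0) S b) -> 0 < pdist par R ii S a b.
Proof.
elim: b => // b IH Hab Ha Hb.
rewrite /pdist big_nat_recr //= -/(pdist par R ii S a b) addn_gt0.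
case Eb: (is_black (nth (inl 0) S b)).
  by rewrite /delta1 Eb Hb /=; case: eqP => //; rewrite orbT.
have Hab' : a < b.
  case: (ltngtP a b) => // H; [lia | by rewrite H Eb in Ha].
by rewrite IH // /is_red Eb.
Qed.

Lemma chain r (par : 'I_r -> bool) R ii S (val : nat -> int) N :
  (forall t, t.+1 < N -> (val t + (delta1 par R ii (nth (inl 0) S t) (nth (inl 0) S t.+1))%:Z
                          <= val t.+1)%R) ->
  forall a b, a <= b -> b < N -> (val a + (pdist par R ii S a b)%:Z <= val b)%R.
Proof.
move=> Hs a; elim=> [|b IH] H1 H2.
  by move: H1; rewrite leqn0 => /eqP ->; rewrite /pdist big_geq // addr0.
case: (ltngtP a b.+1) => H'; last by rewrite H' /pdist big_geq // addr0.
  rewrite /pdist big_nat_recr //= -/(pdist par R ii S a b).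
  have h2 := IH (ltac:(lia)) (ltac:(lia)); have h1 := Hs b H2.
  rewrite PoszD addrA; apply: (le_trans _ h1); by rewrite lerD2r.
lia.
Qed.

Lemma step_ok r (par : 'I_r -> bool) R ii (u w : int) s s' :
  zpar u = spar par R ii s -> zpar w = spar par R ii s' -> (u <= w)%R ->
  (is_black s && is_red s' ==> (u < w)%R) ->
  (u + (delta1 par R ii s s')%:Z <= w)%R.
Proof.
rewrite /delta1 /zpar.
move: (spar par R ii s) (spar par R ii s') (is_black s) (is_red s') => a b c d.
by case: a; case: b; case: c; case: d => /=; lia.
Qed.

Unset Implicit Arguments.

Theorem lemma3p25
  (r : nat) (par : 'I_r -> bool) (e : rel 'I_r)
  (e_sym : symmetric e) (e_irr : irreflexive e)
  (e_bip : forall u v : 'I_r, e u v -> par u != par v)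
  (even_first : forall u v : 'I_r, (u < v)%N -> par u -> par v)
  (R : 'I_r -> seq int)
  (R_par : forall v : 'I_r, all (fun z => zpar z == par v) (R v))
  (ii : seq 'I_r) (kappa : seq nat)
  (Hdatum : idem_datum par R ii kappa) :
  (exists a : seq int, compatible_metric_longitude par R ii kappa a)
  <-> parity_datum par R ii kappa.
Proof.
case: Hdatum => Hsz Hall Hsort.
set S := strands (size ii) kappa.
have HS : pairwise (fun x y => skey (size kappa) kappa x < skey (size kappa) kappa y) S.
  exact: strands_pairwise.
have Hu : uniq S := pairwise_key_uniq HS.
have memS s : (s \in S) = (match s with inl k => k < size ii | inr p => p < size kappa end).
  exact: mem_strands.
have Hidx x y : x \in S -> y \in S ->
    (index x S < index y S) = (skey (size kappa) kappa x < skey (size kappa) kappa y).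
  exact: index_lt_key.
split.
- move=> [a [Ha1 Ha2 Ha3 Ha4]]; rewrite /parity_datum /= -/S => p p' Hpp' Hp'.
  have amono k k' : k <= k' -> k' < size a -> (nth 0%R a k <= nth 0%R a k')%R.
    elim: k' => [|k' IH] H1 H2; first by move: H1; rewrite leqn0 => /eqP ->.
    case: (ltngtP k k'.+1) => H3; last by rewrite H3.
      apply: le_trans (Ha3 _ H2); apply: IH; lia.
    lia.
  pose val (s : strand) : int :=
    match s with inl k => nth 0%R a k | inr p => longitude par R p end.
  have Hpv s : s \in S -> zpar (val s) = spar par R ii s.
    rewrite memS; case: s => [k|q] H /=; first by rewrite Ha2 // Ha1.
    by rewrite longitude_par // -Hsz.
  have Hstep t : t.+1 < size S ->
      (val (nth (inl 0) S t) + (delta1 par R ii (nth (inl 0) S t) (nth (inl 0) S t.+1))%:Z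
        <= val (nth (inl 0) S t.+1))%R.
    move=> Ht.
    have Hx : nth (inl 0) S t \in S by rewrite mem_nth // ltnW.
    have Hy : nth (inl 0) S t.+1 \in S by apply: mem_nth.
    have Hxy : skey (size kappa) kappa (nth (inl 0) S t) < skey (size kappa) kappa (nth (inl 0) S t.+1).
      by rewrite -Hidx // (index_uniq _ (ltnW Ht)) // (index_uniq _ Ht).
    apply: step_ok; [exact: Hpv | exact: Hpv | |];
      move: Hx Hy Hxy; case: (nth (inl 0) S t) => [k|q]; case: (nth (inl 0) S t.+1) => [k'|q'];
      move=> Hx Hy Hxy; move: Hx Hy; rewrite !memS /= => Hx Hy.
    + apply: amono; rewrite ?Ha1 //; move: Hxy; rewrite key_ll; lia.
    + move: Hxy; rewrite key_lr // => Hk.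
      have := Ha4 k q' (ltac:(lia)) (ltac:(lia)); rewrite leqNgt Hk /= => H.
      by apply: ltW; rewrite ltNge H.
    + move: Hxy; rewrite key_rl // => Hk.
      by rewrite Ha4 ?Ha1 -?Hsz.
    + apply: longitude_mono => //; last by rewrite -Hsz.
      move: Hxy; rewrite key_rr //; lia.
    + by [].
    + move: Hxy; rewrite key_lr // => Hk.
      have := Ha4 k q' (ltac:(lia)) (ltac:(lia)); rewrite leqNgt Hk /= => H.
      by rewrite ltNge H.
    + by [].
    + by [].
  have HpS : (inr p : strand) \in S by rewrite memS Hsz; lia.
  have Hp'S : (inr p' : strand) \in S by rewrite memS Hsz; lia.
  have Hlt : index (inr p : strand) S < index (inr p' : strand) S.
    rewrite Hidx // key_rr //; lia.
  have := chain Hstep (ltnW Hlt) (ltac:(by rewrite index_mem)).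
  rewrite !nth_index //= => H.
  lia.
- rewrite /parity_datum /= -/S => Hpd.
  have HposS j : j < size kappa ->
      index (inr j : strand) S < size S /\ nth (inl 0) S (index (inr j : strand) S) = inr j.
    move=> Hj; have Hm : (inr j : strand) \in S by rewrite memS.
    by split; [rewrite index_mem | rewrite nth_index].
  have Hpos_lt j j' : j < size kappa -> j' < size kappa ->
      (index (inr j : strand) S < index (inr j' : strand) S) = (j < j').
    by move=> Hj Hj'; rewrite Hidx ?memS // key_rr.
  pose P t := pdist par R ii S 0 t.
  pose c j : int := if j < size kappa then
      (longitude par R j - (P (index (inr j : strand) S))%:Z)%R
    else ((spar par R ii (nth (inl 0%N) S 0%N) : nat)%:Z)%R.
  pose m t := \big[maxn/0]_(j <- iota 0 (size kappa) | index (inr j : strand) S <= t) j.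
  pose V t := ((P t)%:Z + c (m t))%R.
  have c_mono j j' : j <= j' -> j' < size kappa -> (c j <= c j')%R.
    move=> H1 H2; case: (ltngtP j j') => H3; last by rewrite H3.
      rewrite /c ifT; last by lia.
      rewrite ifT //.
      have Hj' : j' < size (reds par R) by rewrite -Hsz.
      have Hd := Hpd j j' H3 Hj'.
      have Hl := longitude_mono even_first (ltnW H3) Hj'.
      have Hle : index (inr j : strand) S <= index (inr j' : strand) S.
        by apply: ltnW; rewrite Hpos_lt //; lia.
      rewrite /P (pdist_split _ _ _ _ (leq0n _) Hle).
      lia.
    lia.
  have m_bound t : 0 < size kappa -> m t < size kappa.
    move=> H0; suff : m t <= (size kappa).-1 by lia.
    apply/bigmax_leqP_seq => j; rewrite mem_iota => /andP[_ Hj] _; lia.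
  have m_mono t t' : t <= t' -> m t <= m t'.
    move=> Htt; apply/bigmax_leqP_seq => j Hj Hjt.
    apply: (leq_bigmax_seq (F := fun j => j)) => //; lia.
  have m_pos p : p < size kappa -> m (index (inr p : strand) S) = p.
    move=> Hp; apply/eqP; rewrite eqn_leq; apply/andP; split.
      apply/bigmax_leqP_seq => j; rewrite mem_iota => /andP[_ Hj] Hle.
      rewrite leqNgt; apply/negP => H.
      have := Hpos_lt p j Hp (ltac:(lia)); rewrite H; lia.
    by apply: (leq_bigmax_seq (F := fun j => j)) => //; rewrite mem_iota.
  have cm_mono t t' : t <= t' -> (c (m t) <= c (m t'))%R.
    move=> Htt; case: (posnP (size kappa)) => Hk.
      by rewrite /c Hk.
    by apply: c_mono; [exact: m_mono | exact: m_bound].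
  have V_step t : t.+1 < (size S).+1 ->
      (V t + (delta1 par R ii (nth (inl 0) S t) (nth (inl 0) S t.+1))%:Z <= V t.+1)%R.
    move=> _; rewrite /V /P /pdist big_nat_recr //= -/(pdist par R ii S 0 t) -/(P t).
    have := cm_mono t t.+1 (leqnSn t); set d := delta1 _ _ _ _ _; lia.
  have Hc j : zpar (c j) = spar par R ii (nth (inl 0) S 0).
    rewrite /c; case: ifP => Hj.
      rewrite zpar_subn longitude_par -?Hsz // /P pdist_odd // (proj2 (HposS j Hj)) /=.
      by case: (spar _ _ _ _); case: (nth _ _ _).
    by rewrite /zpar; case: (spar _ _ _ _).
  have V_par t : zpar (V t) = spar par R ii (nth (inl 0) S t).
    rewrite /V zpar_addn Hc /P pdist_odd //.
    by case: (spar _ _ _ _); case: (spar _ _ _ _).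
  have V_pos p : p < size kappa -> V (index (inr p : strand) S) = longitude par R p.
    move=> Hp; rewrite /V m_pos // /c Hp; lia.
  have Vch := chain V_step.
  have HlS k : k < size ii -> index (inl k : strand) S < size S /\ nth (inl 0) S (index (inl k : strand) S) = inl k.
    move=> Hk; have Hm : (inl k : strand) \in S by rewrite memS.
    by split; [rewrite index_mem | rewrite nth_index].
  exists [seq V (index (inl k : strand) S) | k <- iota 0 (size ii)].
  split.
  + by rewrite size_map size_iota.
  + move=> k; rewrite size_map size_iota => Hk.
    by rewrite (nth_map 0) ?size_iota // nth_iota // add0n V_par nth_index ?memS.
  + move=> k; rewrite size_map size_iota => Hk.
    rewrite (nth_map 0) ?size_iota; last by lia.
    rewrite (nth_map 0) ?size_iota // !nth_iota //; last by lia.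
    rewrite !add0n.
    have Hle : index (inl k : strand) S <= index (inl k.+1 : strand) S.
      by apply: ltnW; rewrite Hidx ?memS ?key_ll //; lia.
    have := Vch _ _ Hle (ltac:(have := HlS k.+1 Hk; lia)); lia.
  + move=> k p; rewrite size_map size_iota => Hk Hp; rewrite -Hsz in Hp.
    rewrite (nth_map 0) ?size_iota // nth_iota // add0n.
    case: (leqP (nth 0 kappa p) k) => H.
      have Hle : index (inr p : strand) S <= index (inl k : strand) S.
        by apply: ltnW; rewrite Hidx ?memS ?key_rl //.
      have := Vch _ _ Hle (ltac:(have := HlS k Hk; lia)); rewrite V_pos //; lia.
    have Hlt : index (inl k : strand) S < index (inr p : strand) S.
      by rewrite Hidx ?memS ?key_lr //.
    have Hd := @pdist_pos _ par R ii S _ _ Hlt.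
    rewrite !nth_index ?memS // in Hd.
    have := Vch _ _ (ltnW Hlt) (ltac:(have := HposS p Hp; lia)); rewrite V_pos //.
    have := Hd isT isT; lia.
Qed.
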